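(* Let $\mathcal{X}\subset\mathbb{R}^d$ be bounded and $\mathcal{Y}\subset\mathbb{R}$. Let $p_{\mathcal{D}}$ (the data source distribution) and $p_{\mathcal{L}}$ (the training data distribution) be probability densities on $\mathcal{X}\times\mathcal{Y}$ with marginals $p_{\mathcal{X}_{\mathcal{D}}}(\mathbf{x})=\int_{\mathcal{Y}}p_{\mathcal{D}}(\mathbf{x},y)\,dy$ and $p_{\mathcal{X}_{\mathcal{L}}}(\mathbf{x})=\int_{\mathcal{Y}}p_{\mathcal{L}}(\mathbf{x},y)\,dy$, and with common conditional density $p(y\mid\mathbf{x}):=p_{\mathcal{D}}(y\mid\mathbf{x})=p_{\mathcal{L}}(y\mid\mathbf{x})$. Let $\mathcal{L}=\{(\mathbf{x}_j,y_j)\}_{j=1}^b$ be a labeled set with locations $\mathcal{L}_{\mathcal{X}}=\{\mathbf{x}_j\}_{j=1}^b$ sampled from $p_{\mathcal{L}}$, let $m_{\mathcal{L}}\in\mathcal{M}$ be a regression model trained on $\mathcal{L}$, and let $l:\mathcal{X}\times\mathcal{Y}\times\mathcal{M}\to\mathbb{R}^+$ be an error function. Write $\mathbb{E}[\,\cdot\mid\mathbf{x}]$ for expectation of $Y$ with respect to $p(y\mid\mathbf{x})$. Assume: (A1) For every $\mathbf{x}_q\in\mathcal{X}$, $\mathbb{E}[|Y|\mid\mathbf{x}_q]<\infty$, and there is $\epsilon\ge 0$ with $\mathbb{E}\big[\,|Y-\mathbb{E}[Y\mid\mathbf{x}_q]|\,\big|\,\mathbf{x}_q\big]\le\epsilon$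 for all $\mathbf{x}_q\in\mathcal{X}$; moreover there is $\lambda_p\in\mathbb{R}^+$ with $|\mathbb{E}[Y\mid\hat{\mathbf{x}}]-\mathbb{E}[Y\mid\tilde{\mathbf{x}}]|\le\lambda_p\|\hat{\mathbf{x}}-\tilde{\mathbf{x}}\|_2$ for all $\hat{\mathbf{x}},\tilde{\mathbf{x}}\in\mathcal{X}$. (A2) There is $\epsilon_{\mathcal{L}}\ge 0$ with $\mathbb{E}[l(\mathbf{x}_j,Y,m_{\mathcal{L}})\mid\mathbf{x}_j]\le\epsilon_{\mathcal{L}}$ for every $(\mathbf{x}_j,y_j)\in\mathcal{L}$; for every $y\in\mathcal{Y}$ the map $l(\cdot,y,m_{\mathcal{L}})$ is $\lambda_{l_{\mathcal{X}}}$-Lipschitz; and for every $\mathbf{x}\in\mathcal{X}$ the map $l(\mathbf{x},\cdot,m_{\mathcal{L}})$ is $\lambda_{l_{\mathcal{Y}}}$-Lipschitz and convex, with $\mathbb{E}[|l(\mathbf{x},Y,m_{\mathcal{L}})|\mid\mathbf{x}]<\infty$. Then, with $C:=\lambda_{l_{\mathcal{X}}}+\lambda_{l_{\mathcal{Y}}}\lambda_p$, $$\mathbb{E}_{p_{\mathcal{D}}}[l(\mathbf{X},Y,m_{\mathcal{L}})]\le C\,W_{\mathcal{L}_{\mathcal{X}},\mathcal{X}}(p_{\mathcal{X}_{\mathcal{L}}}\,\|\,p_{\mathcal{X}_{\mathcal{D}}})+\lambda_{l_{\mathcal{Y}}}\epsilon+\epsilon_{\mathcal{L}}+\mathbb{E}_{p_{\mathcal{L}}}[l(\mathbf{X},Y,m_{\mathcal{L}})],$$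 where $W_{\mathcal{L}_{\mathcal{X}},\mathcal{X}}$ is the weighted fill distance defined in the context.
   Context: The weighted fill distance of $\mathcal{L}_{\mathcal{X}}=\{\mathbf{x}_j\}_{j=1}^b\subset\mathcal{X}$ in $\mathcal{X}$ with respect to $p_{\mathcal{X}_{\mathcal{D}}}$ is $$W_{\mathcal{L}_{\mathcal{X}},\mathcal{X}}(p_{\mathcal{X}_{\mathcal{L}}}\,\|\,p_{\mathcal{X}_{\mathcal{D}}}):=\sup_{\mathbf{x}\in\mathcal{X}}\min_{\mathbf{x}_j\in\mathcal{L}_{\mathcal{X}}}\|\mathbf{x}-\mathbf{x}_j\|_2\,\psi_{\mathcal{L}_{\mathcal{X}}}(\mathbf{x}),$$ with weight function $\psi_{\mathcal{L}_{\mathcal{X}}}(\mathbf{x})=1-p_{\mathcal{X}_{\mathcal{L}}}(\mathbf{x})/p_{\mathcal{X}_{\mathcal{D}}}(\mathbf{x})$ if $p_{\mathcal{X}_{\mathcal{D}}}(\mathbf{x})\neq 0$ and $\psi_{\mathcal{L}_{\mathcal{X}}}(\mathbf{x})=0$ otherwise. $\mathbb{E}_{p}[l(\mathbf{X},Y,m_{\mathcal{L}})]$ denotes the expectation of $l(\mathbf{X},Y,m_{\mathcal{L}})$ with $(\mathbf{X},Y)\sim p$, for fixed trained model $m_{\mathcal{L}}$. *)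

(* Defs.v *)
From HB Require Import structures.
From mathcomp Require Import all_boot all_order all_algebra.
From mathcomp Require Import all_classical all_reals all_analysis.
Set Implicit Arguments. Unset Strict Implicit. Unset Printing Implicit Defensive.
Import Order.TTheory GRing.Theory Num.Theory.
Import numFieldNormedType.Exports.
Local Open Scope classical_set_scope.
Local Open Scope ring_scope.

Definition Rd (R : realType) (d : nat) := g_sigma_algebraType (@open 'rV[R]_d).

Definition norm2 (R : realType) (d : nat) (v : 'rV[R]_d) : R :=
  Num.sqrt (\sum_(i < d) (v ord0 i) ^+ 2).
Definition dist2 (R : realType) (d : nat) (x y : 'rV[R]_d) : R := norm2 (x - y).

Definition bounded_set2 (R : realType) (d : nat) (X : set (Rd R d)) : Prop :=
  exists M : R, forall x, X x -> norm2 (x : 'rV[R]_d) <= M.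

Definition box (R : realType) (d : nat) (a b : 'rV[R]_d) : set (Rd R d) :=
  [set x | forall i : 'I_d, a ord0 i <= (x : 'rV[R]_d) ord0 i <= b ord0 i].

(* mu is the d-dimensional Lebesgue measure (on the Borel sets): it gives every
   closed box its volume; this characterizes Lebesgue measure uniquely. *)
Definition is_lebesgue_Rd (R : realType) (d : nat)
    (mu : {measure set (Rd R d) -> \bar R}) : Prop :=
  forall a b : 'rV[R]_d, (forall i, a ord0 i <= b ord0 i) ->
    mu (box a b) = (\prod_(i < d) (b ord0 i - a ord0 i))%:E.

Definition marginal (R : realType) (d : nat) (Y : set R) (p : Rd R d -> R -> R)
    (x : Rd R d) : R :=
  fine (\int[@lebesgue_measure R]_(y in Y) (p x y)%:E)%E.

Definition condExp (R : realType) (d : nat) (Y : set R) (cond : Rd R d -> R -> R)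
    (g : R -> R) (x : Rd R d) : \bar R :=
  (\int[@lebesgue_measure R]_(y in Y) (g y * cond x y)%:E)%E.

Definition condMean (R : realType) (d : nat) (Y : set R) (cond : Rd R d -> R -> R)
    (x : Rd R d) : R := fine (condExp Y cond id x).

Definition jointExp (R : realType) (d : nat) (mu : {measure set (Rd R d) -> \bar R})
    (X : set (Rd R d)) (Y : set R) (p : Rd R d -> R -> R) (f : Rd R d -> R -> R) : \bar R :=
  (\int[mu]_(x in X) \int[@lebesgue_measure R]_(y in Y) (f x y * p x y)%:E)%E.

Definition psiw (R : realType) (d : nat) (pXL pXD : Rd R d -> R) (x : Rd R d) : R :=
  if pXD x != 0 then 1 - pXL x / pXD x else 0.

(* min_j ||x - x_j||_2 (in \bar R; +oo for an empty set of locations) *)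
Definition mindist (R : realType) (d b : nat) (xs : 'I_b -> Rd R d) (x : Rd R d) : \bar R :=
  \big[Order.min/+oo%E]_(j < b) (dist2 (x : 'rV[R]_d) (xs j : 'rV[R]_d))%:E.

Definition wfill (R : realType) (d b : nat) (X : set (Rd R d)) (xs : 'I_b -> Rd R d)
    (pXL pXD : Rd R d -> R) : \bar R :=
  ereal_sup [set (mindist xs x * (psiw pXL pXD x)%:E)%E | x in X].

(* Main.v *)
Require Import Defs.
From HB Require Import structures.
From mathcomp Require Import all_boot all_order all_algebra.
From mathcomp Require Import all_classical all_reals all_analysis.
From mathcomp Require Import measurable_realfun.
From mathcomp Require Import ring lra.
Import Order.TTheory GRing.Theory Num.Theory.
Import numFieldNormedType.Exports.
Local Open Scope classical_set_scope.
Local Open Scope ring_scope.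
Set Implicit Arguments. Unset Strict Implicit.

Lemma lip_meas (R : realType) (Y : set R) (f : R -> R) (k : R) :
  measurable Y -> 0 <= k -> (forall a b, Y a -> Y b -> `|f a - f b| <= k * `|a - b|) ->
  measurable_fun Y f.
Proof.
move=> mY k0 lip; apply: subspace_continuous_measurable_fun => //.
apply/subspace_continuousP => x Yx.
apply/cvgrPdist_lt => e e0.
rewrite near_withinE.
have k1 : 0 < k + 1 by rewrite ltr_pwDr.
near=> t => Yt.
rewrite (le_lt_trans (lip _ _ Yx Yt))//.
have : `|x - t| < e / (k + 1).
  near: t. apply: (@cvgr_dist_lt _ _ _ (nbhs x)). exact: cvg_id. by rewrite divr_gt0.
move=> h.
rewrite (le_lt_trans (ler_wpM2l k0 (ltW h)))//.
rewrite mulrA ltr_pdivrMr//; nra.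
Unshelve. all: by end_near. Qed.

Lemma subgrad (R : realType) (Y : set R) (f : R -> R) (k m : R) :
  Y m -> (forall y1 y2 t, Y y1 -> Y y2 -> 0 <= t <= 1 -> Y (t * y1 + (1 - t) * y2)) ->
  0 <= k -> (forall a b, Y a -> Y b -> `|f a - f b| <= k * `|a - b|) ->
  (forall y1 y2 t, Y y1 -> Y y2 -> 0 <= t <= 1 -> f (t * y1 + (1 - t) * y2) <= t * f y1 + (1 - t) * f y2) ->
  exists s, forall y, Y y -> f m + s * (y - m) <= f y.
Proof.
move=> Ym Yconv k0 lip fconv.
have [[u0 [Yu0 lu0]]|hno] := pselect (exists u, Y u /\ u < m); last first.
  exists (- k) => y Yy.
  have my : m <= y by rewrite leNgt; apply/negP => lt; apply: hno; exists y.
  have := lip _ _ Yy Ym; rewrite (ger0_norm (x := y - m)) ?subr_ge0// => h.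
  have h2 := ler_norm (f m - f y); rewrite distrC in h2.
  lra.
pose S := [set (f m - f u) / (m - u) | u in [set u | Y u /\ u < m]].
have Sne : S !=set0 by exists ((f m - f u0) / (m - u0)); exists u0.
have Sub : ubound S k.
  move=> _ [u [Yu lu] <-].
  rewrite ler_pdivrMr ?subr_gt0//.
  apply: le_trans (ler_norm _) _.
  by have := lip _ _ Ym Yu; rewrite (gtr0_norm (x := m - u)) ?subr_gt0.
have slope : forall u v, Y u -> Y v -> u < m -> m < v ->
    (f m - f u) / (m - u) <= (f v - f m) / (v - m).
  move=> u v Yu Yv lu lv.
  have vu : 0 < v - u by rewrite subr_gt0 (lt_trans lu lv).
  pose t := (v - m) / (v - u).
  have et : m = t * u + (1 - t) * v by rewrite /t; field; rewrite gt_eqF.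
  have t01 : 0 <= t <= 1.
    apply/andP; split; first by apply: divr_ge0; [rewrite subr_ge0 ltW | rewrite ltW].
    by rewrite ler_pdivrMr// mul1r; lra.
  have hc := fconv _ _ _ Yu Yv t01; rewrite -et in hc.
  have e1 : t * (v - u) = v - m by rewrite /t; field; rewrite gt_eqF.
  have hm : f m * (v - u) <= (v - m) * f u + (m - u) * f v.
    have := ler_pM2r vu; move=> H; have := hc; rewrite -H => hc'.
    apply: le_trans hc' _; rewrite mulrDl -!mulrA [f u * _]mulrC [f v * _]mulrC !mulrA e1.
    suff -> : (1 - t) * (v - u) = m - u by [].
    by rewrite mulrBl mul1r e1; ring.
  rewrite ler_pdivrMr ?subr_gt0// mulrAC ler_pdivlMr ?subr_gt0//.
  nra.
exists (sup S) => y Yy.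
have [ly|gy|ey] := ltgtP y m.
- have : (f m - f y) / (m - y) <= sup S.
    by apply: ub_le_sup; [exists k | exists y].
  rewrite ler_pdivrMr ?subr_gt0// => h; nra.
- have : sup S <= (f y - f m) / (y - m).
    apply: ge_sup => // _ [u [Yu lu] <-]; exact: slope.
  rewrite ler_pdivlMr ?subr_gt0// => h; nra.
- by rewrite ey subrr mulr0 addr0.
Qed.

Lemma bigmin_attained (R : realType) (b : nat) (F : 'I_b -> R) : (0 < b)%N ->
  exists j, (\big[Order.min/+oo%E]_(i < b) (F i)%:E)%E = (F j)%:E.
Proof.
case: b F => // b F _.
elim: b F => [|b IH] F.
  by exists ord0; rewrite big_ord_recl big_ord0 /= (@min_l _ _ (F ord0)%:E) ?leey.
rewrite big_ord_recl /=.
have [j hj] := IH (fun j => F (lift ord0 j)).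
rewrite hj.
have [le|le] := leP (F ord0)%:E (F (lift ord0 j))%:E.
  by exists ord0.
by exists (lift ord0 j).
Qed.

Lemma pl_bigmin_le (R : realType) (b : nat) (F : 'I_b -> R) j :
  (\big[Order.min/+oo%E]_(i < b) (F i)%:E <= (F j)%:E)%E.
Proof. by rewrite (bigD1 j)//= ge_min lexx. Qed.

Lemma dist2_refl (R : realType) (d : nat) (x : 'rV[R]_d) : dist2 x x = 0.
Proof.
rewrite /dist2 /norm2 subrr big1 ?sqrtr0// => i _.
by rewrite mxE expr0n.
Qed.

Lemma dist2_ge0 (R : realType) (d : nat) (x y : 'rV[R]_d) : 0 <= dist2 x y.
Proof. exact: sqrtr_ge0. Qed.

Lemma pl_core (R : realType) (PD PL g K C r cw : R) :
  0 <= PD -> 0 <= PL -> 0 <= g -> 0 <= K -> 0 <= C -> 0 <= cw ->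
  g <= K + C * r ->
  (PD != 0 -> C * (r * (1 - PL / PD)) <= cw) ->
  PD * g <= PL * g + PD * (K + cw).
Proof.
move=> PD0 PL0 g0 K0 C0 cw0 gK hc.
have [le|lt] := leP PD PL.
  have : PD * g <= PL * g by exact: ler_wpM2r.
  have : 0 <= PD * (K + cw) by rewrite mulr_ge0// addr_ge0.
  lra.
have PDn : PD != 0 by rewrite gt_eqF// (le_lt_trans PL0 lt).
have PDp : 0 < PD by rewrite (le_lt_trans PL0 lt).
have := hc PDn.
have -> : C * (r * (1 - PL / PD)) = C * r * (PD - PL) / PD by field.
rewrite ler_pdivrMr// => h.
have h1 : (PD - PL) * g <= (PD - PL) * (K + C * r) by apply: ler_wpM2l => //; rewrite subr_ge0 ltW.
have h2 : (PD - PL) * K <= PD * K by apply: ler_wpM2r; lra.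
nra.
Qed.

Section helpers.
Import HBNNSimple.
Local Open Scope ereal_scope.
Lemma ge0_le_integral_nm d (T : measurableType d) (R : realType)
  (mu : {measure set T -> \bar R}) (D : set T) (f g : T -> \bar R) :
  (forall x, D x -> 0 <= f x) -> (forall x, D x -> f x <= g x) ->
  \int[mu]_(x in D) f x <= \int[mu]_(x in D) g x.
Proof.
move=> f0 fg.
have g0 : forall x, D x -> 0 <= g x by move=> x Dx; exact: le_trans (f0 _ Dx) (fg _ Dx).
rewrite (ge0_integralE mu f0) (ge0_integralE mu g0) /=.
apply: ereal_sup_le => _ /= [h hf <-]; exists h => //= x.
apply: le_trans (hf x) _; rewrite /patch; case: ifP => // /[1!inE] Dx.
exact: fg.
Qed.

Lemma subaddT d (T : measurableType d) (R : realType)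
  (mu : {measure set T -> \bar R}) (f : T -> \bar R) (g : T -> R) :
  (forall x, 0 <= f x) -> (forall x, (0 <= g x)%R) -> measurable_fun setT g ->
  \int[mu]_x (f x + (g x)%:E) <= \int[mu]_x f x + \int[mu]_x (g x)%:E.
Proof.
move=> f0 g0 mg.
have fg0 : forall x, [set: T] x -> 0 <= f x + (g x)%:E by move=> x _; rewrite adde_ge0// lee_fin.
rewrite (ge0_integralE mu fg0) /=.
apply: ge_ereal_sup => _ /= [h hf <-].
pose u x := Num.max (h x - g x)%R 0%R.
have mu_ : measurable_fun setT u.
  apply: measurable_maxr => //; apply: measurable_funB => //.
have u0 x : (0 <= u x)%R by rewrite /u le_max lexx orbT.
have -> : sintegral mu h = \int[mu]_x (h x)%:E.
  by rewrite integral_nnsfun// patch_setT.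
apply: (@le_trans _ _ (\int[mu]_x ((u x)%:E + (g x)%:E))).
  apply: ge0_le_integral => //.
  - by move=> x _; rewrite lee_fin.
  - exact/measurable_EFinP.
  - by apply: emeasurable_funD; exact/measurable_EFinP.
  - move=> x _; rewrite -EFinD lee_fin /u.
    by rewrite -lerBlDr le_max lexx.
rewrite ge0_integralD//; last 4 first.
  - by move=> x _; rewrite lee_fin.
  - exact/measurable_EFinP.
  - by move=> x _; rewrite lee_fin.
  - exact/measurable_EFinP.
rewrite leeD2r//.
apply: ge0_le_integral_nm => x _; first by rewrite lee_fin.
have := hf x; rewrite patch_setT /= => hx.
rewrite /u; have [hg|hg] := leP (h x - g x)%R 0%R.
  exact: f0.

by rewrite EFinB leeBlDr.
Qed.

Lemma subadd d (T : measurableType d) (R : realType)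
  (mu : {measure set T -> \bar R}) (D : set T) (f : T -> \bar R) (g : T -> R) :
  measurable D ->
  (forall x, D x -> 0 <= f x) -> (forall x, D x -> (0 <= g x)%R) -> measurable_fun D g ->
  \int[mu]_(x in D) (f x + (g x)%:E) <= \int[mu]_(x in D) f x + \int[mu]_(x in D) (g x)%:E.
Proof.
move=> mD f0 g0 mg.
rewrite !(integral_mkcond D).
have mgD : measurable_fun setT (g \_ D) by exact/(measurable_restrictT _ _).1.
have gD0 : forall x, (0 <= (g \_ D) x)%R.
  by move=> x; rewrite /patch; case: ifP => // /[1!inE] /g0.
have fD0 : forall x, 0 <= (f \_ D) x.
  by move=> x; rewrite /patch; case: ifP => // /[1!inE] /f0.
apply: (@le_trans _ _ (\int[mu]_x ((f \_ D) x + ((g \_ D) x)%:E))).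
  apply: ge0_le_integral_nm => x _.
    by rewrite /patch; case: ifP => // /[1!inE] Dx; rewrite adde_ge0// ?lee_fin ?f0 ?g0.
  by rewrite /patch; case: ifP => //; rewrite adde0.
apply: le_trans (@subaddT _ _ _ mu _ _ fD0 gD0 mgD) _.
rewrite leeD2l//; apply: ge0_le_integral_nm => x _.
  by rewrite lee_fin.
by rewrite /patch; case: ifP.
Qed.


Lemma mean_in_Y (R : realType) (Y : set R) (c : R -> R) :
  measurable Y ->
  (forall y1 y2 t, Y y1 -> Y y2 -> (0 <= t <= 1)%R -> Y (t * y1 + (1 - t) * y2)%R) ->
  measurable_fun Y c -> (forall y, Y y -> (0 <= c y)%R) ->
  \int[@lebesgue_measure R]_(y in Y) (c y)%:E = 1 ->
  (@lebesgue_measure R).-integrable Y (fun y => (y * c y)%:E) ->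
  Y (fine (\int[@lebesgue_measure R]_(y in Y) (y * c y)%:E)).
Proof.
move=> mY0 Yconv mc0 c0 c1 yci.
have mY : measurable (Y : set (measurableTypeR R)) := mY0.
have mc : measurable_fun (Y : set (measurableTypeR R)) c := mc0.
set m := fine _.
have ci : (@lebesgue_measure R).-integrable Y (EFin \o c).
  apply/integrableP; split; first exact/measurable_EFinP.
  have -> : \int[@lebesgue_measure R]_(y in Y) `|(EFin \o c) y| = \int[@lebesgue_measure R]_(y in Y) (c y)%:E.
    by apply: eq_integral => y /[1!inE] Yy /=; rewrite ger0_norm ?c0.
  by rewrite c1 ltry.
have Em : \int[@lebesgue_measure R]_(y in Y) (y * c y)%:E = m%:E.
  by rewrite fineK//; exact: integrable_fin_num.
have key : forall s : R, (forall y, Y y -> 0 < s * (y - m))%R -> False.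
  move=> s hs.
  have int0 : \int[@lebesgue_measure R]_(y in Y) (s * (y - m) * c y)%:E = 0.
    transitivity (\int[@lebesgue_measure R]_(y in Y)
                   ((s * (y * c y))%:E - ((s * m) * c y)%:E)).
      by apply: eq_integral => y _; rewrite -EFinB; congr (_%:E); ring.
    have i1 : (@lebesgue_measure R).-integrable Y (fun y : R => s%:E * (y * c y)%:E).
      exact: integrableZl.
    have i2 : (@lebesgue_measure R).-integrable Y (fun y : R => (s * m)%:E * (EFin \o c) y).
      exact: integrableZl.
    have j1 : (@lebesgue_measure R).-integrable Y (EFin \o (fun y : R => s * (y * c y))%R).
      by apply: (eq_integrable mY _ _ _ i1) => y _ /=; rewrite EFinM.
    have j2 : (@lebesgue_measure R).-integrable Y (EFin \o (fun y : R => (s * m) * c y)%R).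
      by apply: (eq_integrable mY _ _ _ i2) => y _ /=; rewrite EFinM.
    rewrite (integralB_EFin mY j1 j2).
    have -> : \int[@lebesgue_measure R]_(y in Y) (s * (y * c y))%:E = \int[@lebesgue_measure R]_(y in Y) (s%:E * (y * c y)%:E).
      by apply: eq_integral => y _; rewrite EFinM.
    have -> : \int[@lebesgue_measure R]_(y in Y) ((s * m) * c y)%:E = \int[@lebesgue_measure R]_(y in Y) ((s * m)%:E * (EFin \o c) y).
      by apply: eq_integral => y _; rewrite EFinM.
    rewrite integralZl// integralZl// Em /= c1 mule1 -EFinM subee//.
  have ae0 : ae_eq (@lebesgue_measure R) Y (fun y => (s * (y - m) * c y)%:E) (cst 0).
    apply/ae_eq_integral_abs => //.
      apply/measurable_EFinP; apply: measurable_funM => //.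
      apply: measurable_funM => //.
      by apply: measurable_funB => //.
    rewrite -int0; apply: eq_integral => y /[1!inE] Yy.
    by rewrite gee0_abs// lee_fin mulr_ge0// ?c0// ltW// hs.
  have : \int[@lebesgue_measure R]_(y in Y) (c y)%:E = \int[@lebesgue_measure R]_(y in Y) (cst 0 y).
    apply: ae_eq_integral => //; first exact/measurable_EFinP.
    apply: filterS ae0 => y Hy Yy.
    have := Hy Yy => /= /eqP; rewrite eqe mulf_eq0 => /orP[/eqP h|/eqP ->//].
    by have := hs y Yy; rewrite h ltxx.
  by rewrite c1 integral0 => /eqP; rewrite onee_eq0.
apply: contrapT => nYm.
have [[y1 [Y1 l1]]|h1] := pselect (exists y, Y y /\ (y < m)%R); last first.
  apply: (key 1%R) => y Yy; rewrite mul1r subr_gt0.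
  rewrite lt_neqAle; apply/andP; split.
    by apply/eqP => e; apply: nYm; rewrite e.
  by rewrite leNgt; apply/negP => lt; apply: h1; exists y.
have [[y2 [Y2 l2]]|h2] := pselect (exists y, Y y /\ (m < y)%R); last first.
  apply: (key (-1)%R) => y Yy; rewrite mulN1r opprB subr_gt0.
  rewrite lt_neqAle; apply/andP; split.
    by apply/eqP => e; apply: nYm; rewrite -e.
  by rewrite leNgt; apply/negP => lt; apply: h2; exists y.
apply: nYm.
have ne : (y2 - y1 != 0)%R by rewrite subr_eq0 gt_eqF// (lt_trans l1 l2).
have pos : (0 < y2 - y1)%R by rewrite subr_gt0 (lt_trans l1 l2).
have -> : m = ((y2 - m) / (y2 - y1) * y1 + (1 - (y2 - m) / (y2 - y1)) * y2)%R.
  by field.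
apply: Yconv => //; apply/andP; split.
  by apply: divr_ge0; [rewrite subr_ge0 ltW | rewrite ltW].
by rewrite ler_pdivrMr// mul1r; lra.
Qed.


Lemma pl_jensen (R : realType) (Y : set R) (c f : R -> R) (k m : R) :
  measurable Y ->
  (forall y1 y2 t, Y y1 -> Y y2 -> (0 <= t <= 1)%R -> Y (t * y1 + (1 - t) * y2)%R) ->
  measurable_fun Y c -> (forall y, Y y -> (0 <= c y)%R) ->
  \int[@lebesgue_measure R]_(y in Y) (c y)%:E = 1 ->
  (@lebesgue_measure R).-integrable Y (fun y => (y * c y)%:E) ->
  \int[@lebesgue_measure R]_(y in Y) (y * c y)%:E = m%:E -> Y m ->
  (0 <= k)%R -> (forall a b, Y a -> Y b -> (`|f a - f b| <= k * `|a - b|)%R) ->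
  (forall y1 y2 t, Y y1 -> Y y2 -> (0 <= t <= 1)%R ->
     (f (t * y1 + (1 - t) * y2) <= t * f y1 + (1 - t) * f y2)%R) ->
  (@lebesgue_measure R).-integrable Y (fun y => (f y * c y)%:E) ->
  (f m)%:E <= \int[@lebesgue_measure R]_(y in Y) (f y * c y)%:E.
Proof.
move=> mY0 Yconv mc0 c0 c1 yci Em Ym k0 lip fconv fci.
have mY : measurable (Y : set (measurableTypeR R)) := mY0.
have mc : measurable_fun (Y : set (measurableTypeR R)) c := mc0.
have ci : (@lebesgue_measure R).-integrable Y (EFin \o c).
  apply/integrableP; split; first exact/measurable_EFinP.
  have -> : \int[@lebesgue_measure R]_(y in Y) `|(EFin \o c) y| = \int[@lebesgue_measure R]_(y in Y) (c y)%:E.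
    by apply: eq_integral => y /[1!inE] Yy /=; rewrite ger0_norm ?c0.
  by rewrite c1 ltry.
have [s hs] := @subgrad _ _ _ _ _ Ym Yconv k0 lip fconv.
pose A := (f m - s * m)%R.
have i1 : (@lebesgue_measure R).-integrable Y (EFin \o (fun y : R => A * c y)%R).
  apply: (eq_integrable mY (fun y => A%:E * (EFin \o c) y)); last exact: integrableZl.
  by move=> y _ /=; rewrite EFinM.
have i2 : (@lebesgue_measure R).-integrable Y (EFin \o (fun y : R => s * (y * c y))%R).
  apply: (eq_integrable mY (fun y => s%:E * (y * c y)%:E)); last exact: integrableZl.
  by move=> y _ /=; rewrite EFinM.
have iD := integrableD mY i1 i2.
apply: (@le_trans _ _ (\int[@lebesgue_measure R]_(y in Y) ((EFin \o (fun y : R => A * c y)%R) \+ (EFin \o (fun y : R => s * (y * c y))%R)) y)).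
  rewrite integralD_EFin//.
  have -> : \int[@lebesgue_measure R]_(y in Y) (EFin \o (fun y : R => A * c y)%R) y = A%:E * \int[@lebesgue_measure R]_(y in Y) (EFin \o c) y.
    rewrite -integralZl//; apply: eq_integral => y _ /=; by rewrite EFinM.
  have -> : \int[@lebesgue_measure R]_(y in Y) (EFin \o (fun y : R => s * (y * c y))%R) y = s%:E * \int[@lebesgue_measure R]_(y in Y) (y * c y)%:E.
    rewrite -integralZl//; apply: eq_integral => y _ /=; by rewrite EFinM.
  rewrite Em.
  have -> : \int[@lebesgue_measure R]_(y in Y) (EFin \o c) y = 1 by rewrite -c1.
  by rewrite -EFinM -EFinD lee_fin /A; lra.
apply: le_integral => //.
move=> y /[1!inE] Yy /=; rewrite -EFinD lee_fin.
have := hs y Yy => h.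
have : ((f m + s * (y - m)) * c y <= f y * c y)%R by apply: ler_wpM2r => //; exact: c0.
by rewrite (_ : A * c y + s * (y * c y) = (f m + s * (y - m)) * c y)%R // /A; ring.
Qed.


Lemma gbound (R : realType) (Y : set R) (c1 f1 f2 : R -> R) (m1 m2 eps kY a b eL : R) :
  measurable Y ->
  measurable_fun Y c1 -> (forall y, Y y -> (0 <= c1 y)%R) ->
  \int[@lebesgue_measure R]_(y in Y) (c1 y)%:E = 1 ->
  Y m1 -> Y m2 ->
  \int[@lebesgue_measure R]_(y in Y) (`|y - m1| * c1 y)%:E <= eps%:E ->
  measurable_fun Y f1 -> (forall y, Y y -> (0 <= f1 y)%R) ->
  (forall y, Y y -> (`|f1 y - f2 y| <= a)%R) ->
  (0 <= kY)%R -> (forall u v, Y u -> Y v -> (`|f2 u - f2 v| <= kY * `|u - v|)%R) ->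
  (`|m1 - m2| <= b)%R -> (f2 m2 <= eL)%R ->
  \int[@lebesgue_measure R]_(y in Y) (f1 y * c1 y)%:E <= (eL + a + kY * b + kY * eps)%:E.
Proof.
move=> mY0 mc0 c0 cint Ym1 Ym2 heps mf0 f0 hfa kY0 lip hb hL.
have mY : measurable (Y : set (measurableTypeR R)) := mY0.
have mc : measurable_fun (Y : set (measurableTypeR R)) c1 := mc0.
have mf : measurable_fun (Y : set (measurableTypeR R)) f1 := mf0.
pose A := (f2 m2 + kY * b + a)%R.
have A0 : (0 <= A)%R.
  have := hfa _ Ym2; have := f0 _ Ym2; rewrite /A.
  have := ler_norm (f1 m2 - f2 m2).
  have : (0 <= kY * b)%R by rewrite mulr_ge0// (le_trans _ hb).
  lra.
have mabs : measurable_fun (Y : set (measurableTypeR R)) (fun y => `|y - m1| * c1 y)%R.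
  apply: measurable_funM => //; apply: measurableT_comp; first exact: normr_measurable.
  by apply: measurable_funB.
apply: (@le_trans _ _ (\int[@lebesgue_measure R]_(y in Y) ((A * c1 y)%:E + kY%:E * (`|y - m1| * c1 y)%:E))).
  apply: ge0_le_integral => //.
  - by move=> y Yy; rewrite lee_fin mulr_ge0 ?f0 ?c0.
  - by apply/measurable_EFinP; apply: measurable_funM.
  - apply: emeasurable_funD.
      by apply/measurable_EFinP; apply: measurable_funM.
    by apply: emeasurable_funM => //; apply/measurable_EFinP.
  - move=> y Yy; rewrite -EFinM -EFinD lee_fin.
    have h1 : (f1 y <= A + kY * `|y - m1|)%R.
      have := hfa _ Yy; have := lip _ _ Yy Ym1; have := lip _ _ Ym1 Ym2.
      have := ler_norm (f1 y - f2 y); have := ler_norm (f2 y - f2 m1);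
      have := ler_norm (f2 m1 - f2 m2).
      have : (kY * `|m1 - m2| <= kY * b)%R by apply: ler_wpM2l.
      rewrite /A; lra.
    have := ler_wpM2r (c0 _ Yy) h1; rewrite mulrDl mulrA; exact.
rewrite ge0_integralD//; last 4 first.
  - by move=> y Yy; rewrite lee_fin mulr_ge0 ?c0.
  - by apply/measurable_EFinP; apply: measurable_funM.
  - by move=> y Yy; rewrite mule_ge0// lee_fin mulr_ge0 ?c0.
  - by apply: emeasurable_funM => //; apply/measurable_EFinP.
have g0 : forall y, Y y -> 0 <= (`|y - m1| * c1 y)%:E by move=> y Yy; rewrite lee_fin mulr_ge0 ?c0.
have gm : measurable_fun (Y : set (measurableTypeR R)) (fun y => (`|y - m1| * c1 y)%:E) by exact/measurable_EFinP.
rewrite (ge0_integralZl_EFin (@lebesgue_measure R) mY g0 gm kY0).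
have -> : \int[@lebesgue_measure R]_(y in Y) (A * c1 y)%:E = A%:E * \int[@lebesgue_measure R]_(y in Y) (c1 y)%:E.
  have h0 : forall y, Y y -> 0 <= (c1 y)%:E by move=> y Yy; rewrite lee_fin c0.
  have hm : measurable_fun (Y : set (measurableTypeR R)) (fun y => (c1 y)%:E) by exact/measurable_EFinP.
  rewrite -(ge0_integralZl_EFin (@lebesgue_measure R) mY h0 hm A0).
  by apply: eq_integral => y _; rewrite EFinM.
rewrite cint mule1.
apply: (@le_trans _ _ (A%:E + kY%:E * eps%:E)).
  by rewrite leeD2l// lee_wpmul2l// lee_fin.
rewrite -EFinM -EFinD lee_fin /A; lra.
Qed.


Lemma sec_meas d1 d2 (T1 : measurableType d1) (T2 : measurableType d2) (R : realType)
  (A : set T1) (B : set T2) (F : T1 * T2 -> R) x :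
  measurable A -> measurable B -> measurable_fun (A `*` B) F -> A x ->
  measurable_fun B (fun y => F (x, y)).
Proof.
move=> mA mB mF Ax.
apply: (@measurable_comp _ _ _ _ _ _ (A `*` B) F B (pair x)) => //.
- exact: measurableX.
- by move=> _ [y By <-]; split.
- exact: measurable_funS (pair1_measurable x).
Qed.

Lemma marg_meas (R : realType) (d : nat) (X : set (Rd R d)) (Y : set R) (p : Rd R d -> R -> R) :
  measurable X -> measurable Y ->
  measurable_fun (X `*` Y) (fun z : Rd R d * R => p z.1 z.2) ->
  (forall x y, X x -> Y y -> (0 <= p x y)%R) ->
  measurable_fun X (fun x => \int[@lebesgue_measure R]_(y in Y) (p x y)%:E).
Proof.
move=> mX mY mp p0.
pose F := (fun z : Rd R d * measurableTypeR R => (p z.1 z.2)%:E) \_ (X `*` Y).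
have mXY : measurable (X `*` Y : set (Rd R d * measurableTypeR R)) by exact: measurableX.
have mF : measurable_fun setT F.
  apply/(measurable_restrictT _ _).1 => //.
  exact/measurable_EFinP.
have F0 : forall z, 0 <= F z.
  by move=> z; rewrite /F /patch; case: ifP => // /[1!inE] [[Xz Yz]]; rewrite lee_fin p0.
have := @measurable_fun_fubini_tonelli_F _ _ (Rd R d) (measurableTypeR R) R (@lebesgue_measure R) F mF F0.
move/(measurable_funS measurableT (@subsetT _ X)).
apply: eq_measurable_fun => x /[1!inE] Xx.
rewrite /fubini_F [X in _ = X]integral_mkcond; apply: eq_integral => y _.
rewrite /F /patch; case: ifP; case: ifP => //.
- move=> /negbT/negP nY; rewrite inE => -[/= _ Yy]; exfalso; apply: nY; exact: mem_set.
- move=> Yy /negbT/negP h; exfalso; apply: h; apply: mem_set; split => //; exact: set_mem.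
Qed.

End helpers.

Unset Implicit Arguments.

Theorem theorem1 (R : realType) (d : nat)
  (mu : {measure set (Rd R d) -> \bar R}) (hmu : is_lebesgue_Rd mu)
  (X : set (Rd R d)) (Y : set R)
  (hXm : measurable X) (hYm : measurable Y) (hXb : bounded_set2 X)
  (hYconv : forall y1 y2 t, Y y1 -> Y y2 -> 0 <= t <= 1 -> Y (t * y1 + (1 - t) * y2))
  (* joint densities p_D, p_L on X x Y *)
  (pD pL : Rd R d -> R -> R)
  (hpDm : measurable_fun (X `*` Y) (fun z : Rd R d * R => pD z.1 z.2))
  (hpLm : measurable_fun (X `*` Y) (fun z : Rd R d * R => pL z.1 z.2))
  (hpD0 : forall x y, X x -> Y y -> 0 <= pD x y)
  (hpL0 : forall x y, X x -> Y y -> 0 <= pL x y)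
  (hpD1 : (\int[mu]_(x in X) \int[@lebesgue_measure R]_(y in Y) (pD x y)%:E = 1)%E)
  (hpL1 : (\int[mu]_(x in X) \int[@lebesgue_measure R]_(y in Y) (pL x y)%:E = 1)%E)
  (* common conditional density p(y | x) *)
  (cond : Rd R d -> R -> R)
  (hcm : measurable_fun (X `*` Y) (fun z : Rd R d * R => cond z.1 z.2))
  (hc0 : forall x y, X x -> Y y -> 0 <= cond x y)
  (hc1 : forall x, X x -> (\int[@lebesgue_measure R]_(y in Y) (cond x y)%:E = 1)%E)
  (hpDc : forall x y, X x -> Y y -> pD x y = marginal Y pD x * cond x y)
  (hpLc : forall x y, X x -> Y y -> pL x y = marginal Y pL x * cond x y)
  (* labeled set L = {(x_j, y_j)}_{j=1}^b, trained model m_L, error function l *)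
  (b : nat) (hb : (0 < b)%N) (xs : 'I_b -> Rd R d) (ys : 'I_b -> R)
  (hxs : forall j, X (xs j)) (hys : forall j, Y (ys j))
  (M : Type) (mL : M) (l : Rd R d -> R -> M -> R)
  (hl0 : forall x y m, X x -> Y y -> 0 <= l x y m)
  (* (A1) *)
  (eps lamp : R) (heps : 0 <= eps) (hlamp : 0 <= lamp)
  (hA1int : forall x, X x -> (condExp Y cond (fun y => `|y|%R) x < +oo)%E)
  (hA1eps : forall x, X x ->
     (condExp Y cond (fun y => `|y - condMean Y cond x|%R) x <= eps%:E)%E)
  (hA1lip : forall x1 x2, X x1 -> X x2 ->
     `|condMean Y cond x1 - condMean Y cond x2| <= lamp * dist2 (x1 : 'rV[R]_d) x2)
  (* (A2) *)
  (epsL lamlX lamlY : R) (hepsL : 0 <= epsL) (hlamlX : 0 <= lamlX) (hlamlY : 0 <= lamlY)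
  (hA2L : forall j, (condExp Y cond (fun y => l (xs j) y mL)%R (xs j) <= epsL%:E)%E)
  (hA2x : forall y x1 x2, Y y -> X x1 -> X x2 ->
     `|l x1 y mL - l x2 y mL| <= lamlX * dist2 (x1 : 'rV[R]_d) x2)
  (hA2y : forall x y1 y2, X x -> Y y1 -> Y y2 ->
     `|l x y1 mL - l x y2 mL| <= lamlY * `|y1 - y2|)
  (hA2conv : forall x y1 y2 t, X x -> Y y1 -> Y y2 -> 0 <= t <= 1 ->
     l x (t * y1 + (1 - t) * y2) mL <= t * l x y1 mL + (1 - t) * l x y2 mL)
  (hA2int : forall x, X x -> (condExp Y cond (fun y => `|l x y mL|%R) x < +oo)%E) :
  let C := lamlX + lamlY * lamp in
  (jointExp mu X Y pD (fun x y => l x y mL) <=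
     C%:E * wfill X xs (marginal Y pL) (marginal Y pD)
     + (lamlY * eps)%:E + epsL%:E
     + jointExp mu X Y pL (fun x y => l x y mL))%E.
Proof.
cbv zeta; set C := lamlX + lamlY * lamp.
have mY : measurable (Y : set (measurableTypeR R)) := hYm.
have C0 : 0 <= C by rewrite /C addr_ge0// mulr_ge0.
have cmeas : forall x, X x -> measurable_fun Y (cond x).
  by move=> x Xx; exact: (sec_meas hXm hYm hcm Xx).
have lmeas : forall x, X x -> measurable_fun Y (fun y => l x y mL).
  by move=> x Xx; apply: (lip_meas hYm hlamlY) => u v Yu Yv; exact: hA2y.
have yci : forall x, X x ->
    (@lebesgue_measure R).-integrable Y (fun y => (y * cond x y)%:E).
  move=> x Xx; apply/integrableP; split.
    apply/measurable_EFinP; apply: measurable_funM => //; exact: cmeas.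
  apply: le_lt_trans (hA1int x Xx); rewrite le_eqVlt; apply/orP; left; apply/eqP.
  by apply: eq_integral => y /[1!inE] Yy /=; rewrite normrM (ger0_norm (hc0 _ _ Xx Yy)).
have Em : forall x, X x ->
    (\int[@lebesgue_measure R]_(y in Y) (y * cond x y)%:E = (condMean Y cond x)%:E)%E.
  by move=> x Xx; rewrite /condMean /condExp /= fineK//; exact: integrable_fin_num (yci x Xx).
have Ym : forall x, X x -> Y (condMean Y cond x).
  move=> x Xx; have := mean_in_Y hYm hYconv (cmeas x Xx) (hc0 x ^~ Xx) (hc1 x Xx) (yci x Xx).
  by rewrite /condMean /condExp.
have fci : forall z, X z ->
    (@lebesgue_measure R).-integrable Y (fun y => (l z y mL * cond z y)%:E).
  move=> x Xx; apply/integrableP; split.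
    apply/measurable_EFinP; apply: measurable_funM; [exact: lmeas | exact: cmeas].
  apply: le_lt_trans (hA2int x Xx); rewrite le_eqVlt; apply/orP; left; apply/eqP.
  by apply: eq_integral => y /[1!inE] Yy /=; rewrite normrM (ger0_norm (hc0 _ _ Xx Yy)).
have jen : forall j, l (xs j) (condMean Y cond (xs j)) mL <= epsL.
  move=> j; rewrite -lee_fin; apply: le_trans (hA2L j).
  apply: (pl_jensen hYm hYconv (cmeas _ (hxs j)) (hc0 _ ^~ (hxs j)) (hc1 _ (hxs j))
    (yci _ (hxs j)) (Em _ (hxs j)) (Ym _ (hxs j)) hlamlY _ _ (fci _ (hxs j))).
  - by move=> u v Yu Yv; exact: hA2y.
  - by move=> y1 y2 t Y1 Y2 t01; exact: hA2conv.
pose G x := (\int[@lebesgue_measure R]_(y in Y) (l x y mL * cond x y)%:E)%E.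
pose g x := fine (G x).
have gE : forall x, X x -> G x = (g x)%:E.
  by move=> x Xx; rewrite /g fineK//; exact: integrable_fin_num (fci x Xx).
have g0 : forall x, X x -> 0 <= g x.
  move=> x Xx; apply: fine_ge0; apply: integral_ge0 => y Yy.
  by rewrite lee_fin mulr_ge0// ?hl0// hc0.
pose K := epsL + lamlY * eps.
have K0 : 0 <= K by rewrite /K addr_ge0// mulr_ge0.
have gK : forall x, X x -> exists r, mindist xs x = r%:E /\ 0 <= r /\ g x <= K + C * r.
  move=> x Xx.
  have [j hj] := bigmin_attained (fun j => dist2 (x : 'rV[R]_d) (xs j : 'rV[R]_d)) hb.
  exists (dist2 (x : 'rV[R]_d) (xs j : 'rV[R]_d)); split; first exact: hj.
  split; first exact: dist2_ge0.
  have := gbound hYm (cmeas x Xx) (hc0 x ^~ Xx) (hc1 x Xx) (Ym x Xx) (Ym _ (hxs j))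
    (hA1eps x Xx) (lmeas x Xx) (fun y Yy => hl0 x y mL Xx Yy)
    (fun y Yy => hA2x y x (xs j) Yy Xx (hxs j)) hlamlY
    (fun u v Yu Yv => hA2y (xs j) u v (hxs j) Yu Yv) (hA1lip x (xs j) Xx (hxs j)) (jen j).
  rewrite -/(G x) gE// lee_fin /K /C => h.
  by apply: le_trans h _; rewrite le_eqVlt; apply/orP; left; apply/eqP; ring.
have margE : forall q : Rd R d -> R -> R, (forall x y, X x -> Y y -> 0 <= q x y) ->
    (forall x y, X x -> Y y -> q x y = marginal Y q x * cond x y) ->
    forall x, X x -> (\int[@lebesgue_measure R]_(y in Y) (q x y)%:E = (marginal Y q x)%:E)%E.
  move=> q p0 pc x Xx.
  set I := (\int[@lebesgue_measure R]_(y in Y) (q x y)%:E)%E.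
  have I0 : (0 <= I)%E by apply: integral_ge0 => y Yy; rewrite lee_fin p0.
  have Ifin : I != +oo%E.
    apply/eqP => Ioo.
    have : I = 0%E.
      rewrite /I; apply: integral0_eq => y Yy /=.
      by rewrite pc// /marginal -/I Ioo /= mul0r.
    by rewrite Ioo.
  by rewrite /marginal -/I fineK// ge0_fin_numE// ltey.
have marg0 : forall q : Rd R d -> R -> R, (forall x y, X x -> Y y -> 0 <= q x y) ->
    forall x, X x -> 0 <= marginal Y q x.
  move=> q p0 x Xx; apply: fine_ge0; apply: integral_ge0 => y Yy; by rewrite lee_fin p0.
have margM : forall q : Rd R d -> R -> R,
    measurable_fun (X `*` Y) (fun z : Rd R d * R => q z.1 z.2) ->
    (forall x y, X x -> Y y -> 0 <= q x y) ->
    (forall x y, X x -> Y y -> q x y = marginal Y q x * cond x y) ->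
    measurable_fun X (marginal Y q).
  move=> q pm p0 pc; apply/measurable_EFinP.
  apply: eq_measurable_fun (marg_meas hXm hYm pm p0) => x /[1!inE] Xx.
  exact: margE.
have inner : forall q : Rd R d -> R -> R, (forall x y, X x -> Y y -> 0 <= q x y) ->
    (forall x y, X x -> Y y -> q x y = marginal Y q x * cond x y) ->
    forall x, X x -> (\int[@lebesgue_measure R]_(y in Y) (l x y mL * q x y)%:E
                      = (marginal Y q x * g x)%:E)%E.
  move=> q p0 pc x Xx.
  transitivity (\int[@lebesgue_measure R]_(y in Y) ((marginal Y q x)%:E * (l x y mL * cond x y)%:E))%E.
    by apply: eq_integral => y /[1!inE] Yy; rewrite pc// -EFinM; congr (_%:E); ring.
  have h0 : forall y, Y y -> (0 <= (l x y mL * cond x y)%:E)%E.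
    by move=> y Yy; rewrite lee_fin mulr_ge0// ?hl0// hc0.
  have hm : measurable_fun (Y : set (measurableTypeR R)) (fun y => (l x y mL * cond x y)%:E).
    by apply/measurable_EFinP; apply: measurable_funM; [exact: lmeas | exact: cmeas].
  rewrite (ge0_integralZl_EFin (@lebesgue_measure R) mY h0 hm (marg0 q p0 x Xx)).
  by rewrite -/(G x) gE// -EFinM.
set W := wfill X xs (marginal Y pL) (marginal Y pD).
pose psi x := psiw (marginal Y pL) (marginal Y pD) x.
have Wub : forall x r, X x -> mindist xs x = r%:E -> ((r * psi x)%:E <= W)%E.
  move=> x r Xx hr; apply: ereal_sup_ubound; exists x => //.
  by rewrite hr EFinM.
have W0 : (0 <= W)%E.
  pose j0 := Ordinal hb.
  have hm : mindist xs (xs j0) = 0%:E.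
    have [j hj] := bigmin_attained (fun j => dist2 (xs j0 : 'rV[R]_d) (xs j : 'rV[R]_d)) hb.
    apply/eqP; rewrite eq_le; apply/andP; split.
      have := pl_bigmin_le (fun j => dist2 (xs j0 : 'rV[R]_d) (xs j : 'rV[R]_d)) j0.
      by rewrite dist2_refl.
    by rewrite /mindist hj lee_fin dist2_ge0.
  by have := Wub _ _ (hxs j0) hm; rewrite mul0r.
have J0 : (0 <= jointExp mu X Y pL (fun x y => l x y mL))%E.
  apply: integral_ge0 => x Xx; apply: integral_ge0 => y Yy.
  by rewrite lee_fin mulr_ge0 ?hl0 ?hpL0.
have [Winf|Wfin] := eqVneq (C%:E * W)%E +oo%E.
  rewrite Winf (@addye R) ?leey//.
  by apply: contraTneq J0 => ->.
have CW0 : (0 <= C%:E * W)%E by rewrite mule_ge0// lee_fin.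
pose cw := fine (C%:E * W).
have Ecw : (C%:E * W)%E = cw%:E.
  by rewrite /cw fineK// ge0_fin_numE// ltey.
have cw0 : 0 <= cw by apply: fine_ge0.
have cwb : forall x r, X x -> mindist xs x = r%:E -> C * (r * psi x) <= cw.
  move=> x r Xx hr; rewrite -lee_fin -Ecw EFinM.
  by apply: lee_wpmul2l; [rewrite lee_fin | exact: Wub].
have pw : forall x, X x ->
    (\int[@lebesgue_measure R]_(y in Y) (l x y mL * pD x y)%:E <=
     \int[@lebesgue_measure R]_(y in Y) (l x y mL * pL x y)%:E
       + (marginal Y pD x * (K + cw))%:E)%E.
  move=> x Xx; rewrite (inner pD hpD0 hpDc x Xx) (inner pL hpL0 hpLc x Xx) -EFinD lee_fin.
  have [r [hr [r0 grK]]] := gK x Xx.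
  apply: (pl_core (C := C) (r := r)) => //.
  - exact: marg0.
  - exact: marg0.
  - exact: g0.
  - by move=> nz; have := cwb x r Xx hr; rewrite /psi /psiw nz.
have mP : measurable_fun X (marginal Y pD) by exact: margM.
have Pint : (\int[mu]_(x in X) (marginal Y pD x * (K + cw))%:E = (K + cw)%:E)%E.
  have h0 : forall x, X x -> (0 <= (marginal Y pD x)%:E)%E.
    by move=> x Xx; rewrite lee_fin; exact: marg0.
  have hm : measurable_fun X (fun x => (marginal Y pD x)%:E) by exact/measurable_EFinP.
  transitivity (\int[mu]_(x in X) ((K + cw)%:E * (marginal Y pD x)%:E))%E.
    by apply: eq_integral => x _; rewrite -EFinM mulrC.
  rewrite (ge0_integralZl_EFin mu hXm h0 hm); last by rewrite addr_ge0.
  have -> : (\int[mu]_(x in X) (marginal Y pD x)%:E = 1)%E.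
    rewrite -hpD1; apply: eq_integral => x /[1!inE] Xx.
    by rewrite margE.
  by rewrite mule1.
rewrite /jointExp.
apply: le_trans.
  apply: (@ge0_le_integral_nm _ _ _ mu X _ (fun x =>
     \int[@lebesgue_measure R]_(y in Y) (l x y mL * pL x y)%:E
       + (marginal Y pD x * (K + cw))%:E)%E).
  - move=> x Xx; apply: integral_ge0 => y Yy.
    by rewrite lee_fin mulr_ge0 ?hl0 ?hpD0.
  - exact: pw.
apply: le_trans.
  apply: subadd => //.
  - move=> x Xx; apply: integral_ge0 => y Yy.
    by rewrite lee_fin mulr_ge0 ?hl0 ?hpL0.
  - by move=> x Xx; apply: mulr_ge0; [exact: (marg0 _ hpD0 x Xx) | exact: addr_ge0].
  - by apply: measurable_funM.
rewrite Pint Ecw /K -!EFinD addeC.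
by rewrite (_ : cw + lamlY * eps + epsL = epsL + lamlY * eps + cw)//; ring.
Qed.
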